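(* Let $c\ge 3$ and let $G$ be a $c$-edge-colored multigraph (without loops, and with no two parallel edges of the same color) with $n$ vertices, such that $|E_{uv}|\le c-1$ for every pair of distinct vertices $u,v$. If $\delta_i(x)\ge n/2$ for every $x\in V(G)$ and every $i\in\{1,\ldots,c\}$, then $G$ has a properly colored hamiltonian cycle.
   Context: A $c$-edge-colored multigraph is a finite multigraph without loops (parallel edges allowed) together with a map $\phi:E(G)\to\{1,\ldots,c\}$. For $u,v\in V(G)$, $E_{uv}$ is the set of edges with end vertices $u$ and $v$. For $x\in V(G)$ and a color $i$, $\delta_i(x)$ is the number of vertices joined to $x$ by an edge of color $i$. A properly colored (PC) hamiltonian cycle is a cyclic sequence $(x_1,f_1,x_2,f_2,\ldots,x_n,f_n,x_1)$ containing every vertex exactly once, with $f_i\in E_{x_ix_{i+1}}$ (indices mod $n$), such that any two consecutive edges, including $f_n$ and $f_1$, have different colors. *)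

(* Defs.v *)
From mathcomp Require Import all_boot all_fingroup.
Set Implicit Arguments. Unset Strict Implicit. Unset Printing Implicit Defensive.

(* A c-edge-coloured loopless multigraph on vertex set 'I_n, with no two
   parallel edges of the same colour, is encoded by
   col : 'I_n -> 'I_n -> 'I_c -> bool, where col u v i means that there is
   an edge of colour i between u and v.  Colours {1..c} are 'I_c. *)
Definition colored_multigraph (n c : nat) (col : 'I_n -> 'I_n -> 'I_c -> bool) :=
  (forall u v i, col u v i = col v u i) /\ (forall u i, ~~ col u u i).

Definition mult (n c : nat) (col : 'I_n -> 'I_n -> 'I_c -> bool) (u v : 'I_n) : nat :=
  #|[set i | col u v i]|.

Definition cdeg (n c : nat) (col : 'I_n -> 'I_n -> 'I_c -> bool) (i : 'I_c) (x : 'I_n) : nat :=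
  #|[set y | col x y i]|.

(* Properly coloured hamiltonian cycle (x_1,f_1,...,x_n,f_n,x_1):
   the vertices are listed by a permutation p of 'I_n (position k -> vertex),
   f k is the colour of the edge from position k to position k+1 (mod n),
   and consecutive edges (cyclically) have distinct colours. *)
Definition PC_hamiltonian_cycle (n c : nat) (col : 'I_n -> 'I_n -> 'I_c -> bool) :=
  exists (p : {perm 'I_n}) (f : 'I_n -> 'I_c),
    forall k : 'I_n, col (p k) (p (ordS k)) (f k) /\ f k != f (ordS k).

(* Main.v *)
Require Import Defs.
From mathcomp Require Import all_boot all_fingroup zify.
Set Implicit Arguments. Unset Strict Implicit. Unset Printing Implicit Defensive.

Lemma count_card (T : finType) (s : seq T) (P : pred T) :
  uniq s -> {subset P <= s} -> count P s = #|P|.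
Proof.
move=> us sub; rewrite -size_filter.
have uf : uniq (filter P s) by exact: filter_uniq.
rewrite -(card_uniqP uf); apply: eq_card => y.
rewrite mem_filter; case Py: (P y) => //=.
by rewrite sub // unfold_in Py.
Qed.

Lemma cross_idx (T : Type) (x0 : T) (s : seq T) (P Q : pred T) :
  (size s).-1 < count P (behead s) + count Q (take (size s).-1 s) ->
  exists i, [/\ i.+1 < size s, P (nth x0 s i.+1) & Q (nth x0 s i)].
Proof.
set m := (size s).-1.
have e1 : count P (behead s) = count (fun k => P (nth x0 s k.+1)) (iota 0 m).
  have -> : behead s = [seq nth x0 s k | k <- iota 1 m].
    rewrite map_nth_iota; last by rewrite /m subn1.
    by rewrite drop1 take_oversize // size_behead.
  by rewrite count_map -(addn0 1) iotaDl count_map.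
have e2 : count Q (take m s) = count (fun k => Q (nth x0 s k)) (iota 0 m).
  have -> : take m s = [seq nth x0 s k | k <- iota 0 m].
    by rewrite map_nth_iota ?drop0 // subn0 /m; exact: leq_pred.
  by rewrite count_map.
rewrite e1 e2 => H.
have : 0 < count (predI (fun k => P (nth x0 s k.+1)) (fun k => Q (nth x0 s k))) (iota 0 m).
  have := count_predUI (fun k => P (nth x0 s k.+1)) (fun k => Q (nth x0 s k)) (iota 0 m).
  have := count_size (predU (fun k => P (nth x0 s k.+1)) (fun k => Q (nth x0 s k))) (iota 0 m).
  rewrite size_iota; lia.
rewrite -has_count => /hasP [i]; rewrite mem_iota add0n => Hi /= /andP [Pi Qi].
exists i; split => //; move: Hi; rewrite /m; case: (size s) => //.
Qed.

Lemma last_rev_belast (T : Type) (b : T) (B : seq T) :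
  last (last b B) (rev (belast b B)) = b.
Proof.
case: B => //= y B'.
by rewrite rev_cons last_rcons.
Qed.

Lemma cross_core (T : Type) (e : rel T) (a b : T) (A B : seq T) :
  symmetric e -> path e a (A ++ b :: B) -> e a b ->
  path e (last b B) (rev (belast b B) ++ a :: A).
Proof.
move=> sym; rewrite cat_path => /andP [pA /= /andP [_ pB]] eab.
rewrite cat_path last_rev_belast rev_path /= sym eab pA !andbT.
by rewrite (@eq_path _ _ e) // => u v; rewrite sym.
Qed.

Lemma cross (T : eqType) (e : rel T) (x0 : T) (s : seq T) i :
  symmetric e -> path e (head x0 s) (behead s) -> i.+1 < size s ->
  e (nth x0 s 0) (nth x0 s i.+1) ->
  let D := rev (drop i.+1 s) ++ take i.+1 s in
  [/\ path e (head x0 D) (behead D), head x0 D = last x0 s,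
      last x0 D = nth x0 s i & perm_eq D s].
Proof.
move=> sym ps lti eab D.
have pD : perm_eq D s.
  by rewrite /D perm_catC -{3}(cat_take_drop i.+1 s) perm_cat2l perm_rev.
have Hs := cat_take_drop i.+1 s.
have st : size (take i.+1 s) = i.+1 by rewrite size_take lti.
have nti : nth x0 s i = last x0 (take i.+1 s).
  by rewrite -nth_last st /= (nth_take _ (ltnSn i)).
have nb : nth x0 s i.+1 = head x0 (drop i.+1 s) by rewrite -nth0 nth_drop addn0.
have sd : 0 < size (drop i.+1 s) by rewrite size_drop subn_gt0.
rewrite nti; split => //; clear pD; move: ps eab st nti Hs nb sd; rewrite /D; clear D;
  case: (take i.+1 s) => [|a A]; case: (drop i.+1 s) => [|b B];
  move=> ps eab st nti Hs nb sd; try discriminate; try by [];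
  subst s; move: ps eab nb => /= ps eab nb;
  rewrite (lastI b B) rev_rcons /=.
- by rewrite nb in eab; exact: cross_core.
- by rewrite -lastI last_cat.
- by rewrite last_cat.
Qed.

Lemma path_nth (T : Type) (e : rel T) (x0 : T) (s : seq T) :
  path e (head x0 s) (behead s) -> forall k, k.+1 < size s -> e (nth x0 s k) (nth x0 s k.+1).
Proof.
case: s => [|h p] //= /(pathP x0) H k lt; exact: H.
Qed.

Lemma cycle_nth (T : Type) (e : rel T) (x0 : T) (s : seq T) :
  path.cycle e s -> forall k, k < size s -> e (nth x0 s k) (nth x0 s (k.+1 %% size s)).
Proof.
case: s => [|h p] //= /(pathP x0) H k lt.
have := H k; rewrite size_rcons => /(_ lt).
have -> : nth x0 (h :: rcons p h) k = nth x0 (h :: p) k.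
  by rewrite -rcons_cons nth_rcons /= lt.
rewrite nth_rcons; case: ltnP => hk.
  by rewrite modn_small //.
have ek : k = size p by apply/eqP; rewrite eqn_leq hk andbT -ltnS.
by rewrite ek eqxx modnn.
Qed.

Lemma nth_rot (T : Type) (x0 : T) (s : seq T) r k :
  r <= size s -> k < size s -> nth x0 (rot r s) k = nth x0 s ((k + r) %% size s).
Proof.
move=> hr hk; rewrite /rot nth_cat size_drop.
case: ltnP => h.
  rewrite nth_drop addnC modn_small //; lia.
rewrite nth_take; last by lia.
have -> : k + r = (k - (size s - r)) + size s by lia.
rewrite modnDr modn_small //; lia.
Qed.

Lemma card_setP (T : finType) (P : pred T) : #|[set y | P y]| = #|P|.
Proof. by apply: eq_card => y; rewrite inE. Qed.

Lemma mem_take_last (T : eqType) (x0 : T) (s : seq T) y :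
  y \in s -> y != last x0 s -> y \in take (size s).-1 s.
Proof.
case: s => [|h p] //= ys yz.
move: ys; rewrite -/(h :: p) (lastI h p) mem_rcons in_cons (negPf yz) /=.
by rewrite -cats1 take_size_cat // size_belast.
Qed.

Lemma dirac (T : finType) (e : rel T) (x0 : T) :
  symmetric e -> irreflexive e -> (forall x, #|T| < 2 * #|[set y | e x y]|) ->
  exists s, [/\ uniq s, size s = #|T| & path.cycle e s].
Proof.
move=> sym irr deg.
pose up (s : seq T) := uniq s && path e (head x0 s) (behead s).
pose P k := [exists t : k.-tuple T, up t].
have P1 : exists k, P k by exists 1; apply/existsP; exists [tuple x0].
have ub : forall k, P k -> k <= #|T|.
  move=> k /existsP [t /andP [ut _]].
  by rewrite -(size_tuple t) -(card_uniqP ut); exact: max_card.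
case: (ex_maxnP P1 ub) => m Pm maxm.
have mN := ub m Pm.
have long : forall s', up s' -> size s' <= m.
  by move=> s' us; apply: maxm; apply/existsP; exists (in_tuple s').
have m1 : 1 <= m by apply: maxm; apply/existsP; exists [tuple x0].
case/existsP: Pm => t /andP [].
have := size_tuple t; case: (tval t) => [|h p]; first by move=> sz; rewrite -sz in m1.
move=> ss us ps; move: ss ps => /= ss ps.
have nh : forall y, e h y -> y \in p.
  move=> y ehy; apply/negPn/negP => ynp.
  have yh : y != h by apply/eqP => E; rewrite E irr in ehy.
  have U : uniq (y :: h :: p) by rewrite cons_uniq in_cons negb_or yh ynp us.
  have Pt : path e (head x0 (y :: h :: p)) (behead (y :: h :: p)) by rewrite /= -sym ehy ps.
  by have := long (y :: h :: p); rewrite /up U Pt /= ss ltnn => /(_ isT).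
set z := last h p.
have nz : forall y, e z y -> y \in take (size (h :: p)).-1 (h :: p).
  move=> y ezy; apply: (@mem_take_last _ x0 (h :: p) y); last first.
    by apply/eqP => /= E; rewrite -/z E irr in ezy.
  apply/negPn/negP => yn.
  have U : uniq (rcons (h :: p) y) by rewrite rcons_uniq yn us.
  have Pt : path e (head x0 (rcons (h :: p) y)) (behead (rcons (h :: p) y)).
    by rewrite /= rcons_path ps ezy.
  by have := long (rcons (h :: p) y); rewrite /up U Pt size_rcons /= ss ltnn => /(_ isT).
have up' : uniq p by case/andP: us.
have dh : count (e h) p = #|[set y | e h y]|.
  by rewrite card_setP; apply: count_card => // y; exact: nh.
have dz : count (e z) (take (size (h :: p)).-1 (h :: p)) = #|[set y | e z y]|.
  by rewrite card_setP; apply: count_card; [exact: take_uniq | move=> y; exact: nz].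
have := @cross_idx _ x0 (h :: p) (e h) (e z).
rewrite /= in dz *; rewrite dh dz ss.
have := deg h; have := deg z => d1 d2.
case; first by lia.
move=> i [lti ehi ezi].
have lti' : i.+1 < size (h :: p) by rewrite /= ss.
have := @cross _ e x0 (h :: p) i sym ps lti' ehi.
set D := rev _ ++ _; move=> [pD hD lD permD].
have uD : uniq D by rewrite (perm_uniq permD).
have sD : size D = m by rewrite (perm_size permD).
have cD : path.cycle e D.
  move: (D) pD hD lD sD; case => [|d q] //=.
  move=> pD hd lD _; rewrite rcons_path pD lD hd /=.
  by rewrite sym.
exists D; split => //; rewrite sD.
case: (ltnP m #|T|) => lt; last by apply/eqP; rewrite eqn_leq mN lt.
exfalso.
case: (pickP (fun w => w \notin D)) => [w wD | none]; last first.
  have : #|T| <= #|D|.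
    by apply: subset_leq_card; apply/subsetP => w _; have := none w; move/negbFE.
  by rewrite (card_uniqP uD) sD leqNgt lt.
case: (boolP (has (e w) D)) => [/hasP [y yD ewy] | /hasPn hn].
  case/rot_to: yD => r q Er.
  have cq : path.cycle e (y :: q) by rewrite -Er rot_cycle.
  have pq : path e y q by move: cq => /=; rewrite rcons_path => /andP [].
  have U : uniq (w :: y :: q) by rewrite cons_uniq -Er mem_rot wD rot_uniq uD.
  have Pt : path e (head x0 (w :: y :: q)) (behead (w :: y :: q)) by rewrite /= ewy pq.
  rewrite -(size_rot r) Er /= in sD.
  by have := long (w :: y :: q); rewrite /up U Pt /= sD ltnn => /(_ isT).
have sub : [set y | e w y] \subset ~: (w |: [set y in D]).
  apply/subsetP => y; rewrite !inE negb_or => ewy; apply/andP; split.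
    by apply/eqP => E; rewrite E irr in ewy.
  by apply/negP => yD; have := hn y yD; rewrite ewy.
have c1 := subset_leq_card sub.
have c2 := cardsC (w |: [set y in D]).
rewrite cardsU1 cardsE (card_uniqP uD) sD inE (negPf wD) /= in c2.
have c3 : count (e h) p <= size p := count_size _ _.
rewrite dh in c3.
have dw := deg w.
move: c1 c2 c3 ss d2 dw.
move: #|[set y | e w y]| #|~: (w |: [set y in D])| #|[set y | e h y]| #|T| (size p).
move=> a b c N sp; lia.
Qed.
Definition gstep c (L : nat -> {set 'I_c}) n (x : 'I_c) k (prev : 'I_c) : 'I_c :=
  odflt x [pick y in (L k :\ prev) :\ (if k == n.-2 then x else prev)].

Fixpoint gr c (L : nat -> {set 'I_c}) n x k : 'I_c :=
  match k with 0 => gstep L n x 0 x | k'.+1 => gstep L n x k (gr L n x k') end.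

Lemma gstep_spec c (L : nat -> {set 'I_c}) n x k prev :
  0 < #|(L k :\ prev) :\ (if k == n.-2 then x else prev)| ->
  [/\ gstep L n x k prev \in L k, gstep L n x k prev != prev &
      (k == n.-2 -> gstep L n x k prev != x)].
Proof.
rewrite /gstep; case: pickP => [y | none].
  rewrite !inE /= => /andP [h1 /andP [h2 h3]] _; split => //.
  by move=> E; move: h1; rewrite E.
by rewrite (eq_card0 none).
Qed.

Lemma cardD1_ge (T : finType) (A : {set T}) a : #|A| <= (#|A :\ a|).+1.
Proof. by rewrite (cardsD1 a A); case: (a \in A). Qed.

Lemma greedy c n (L : nat -> {set 'I_c}) (x : 'I_c) :
  1 < n -> x \in L n.-1 -> (forall k, k < n.-1 -> 1 < #|L k|) ->
  1 < #|L n.-2 :\ x| ->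
  exists g : nat -> 'I_c, forall k, k < n -> g k \in L k /\ g k != g (k.+1 %% n).
Proof.
move=> n1 xL L2 Lx.
have spec : forall k, k < n.-1 ->
    [/\ gr L n x k \in L k, gr L n x k != (if k is k'.+1 then gr L n x k' else x) &
        (k == n.-2 -> gr L n x k != x)].
  move=> k lk.
  have H : forall prev, 0 < #|(L k :\ prev) :\ (if k == n.-2 then x else prev)|.
    move=> prev; case: eqP => [E | _].
      rewrite setDDl setUC -setDDl.
      have := cardD1_ge (L k :\ x) prev; rewrite E in Lx *; lia.
    rewrite setDDl setUid.
    have := cardD1_ge (L k) prev; have := L2 k lk; lia.
  by case: k lk H => [|k] lk H /=; apply: gstep_spec.
exists (fun k => if k == n.-1 then x else gr L n x k) => k lk /=.
have [E | NE] := eqVneq k n.-1.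
  subst k.
  have -> : (n.-1).+1 %% n = 0 by rewrite prednK ?modnn //; lia.
  have n0 : (0 == n.-1) = false by apply/negbTE; lia.
  rewrite n0; split => //.
  have [_ h _] := spec 0 ltac:(lia).
  by rewrite eq_sym.

have lk' : k < n.-1 by lia.
have [h1 h2 h3] := spec k lk'.
split => //.
rewrite modn_small; last by lia.
have [E1 | NE1] := eqVneq k.+1 n.-1.
  by apply: h3; apply/eqP; lia.

have [_ h _] := spec k.+1 ltac:(lia).
by rewrite eq_sym.
Qed.
Lemma toPC c n (col : 'I_n -> 'I_n -> 'I_c -> bool) (x0 : 'I_n) (s : seq 'I_n) (g : nat -> 'I_c) :
  uniq s -> size s = n ->
  (forall k, k < n -> col (nth x0 s k) (nth x0 s (k.+1 %% n)) (g k) /\ g k != g (k.+1 %% n)) ->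
  PC_hamiltonian_cycle col.
Proof.
move=> us ss H.
have inj : injective (fun k : 'I_n => nth x0 s k).
  move=> i j /eqP; rewrite nth_uniq ?ss // => /eqP; exact: val_inj.
exists (perm inj), (fun k => g k) => k; rewrite !permE /=.
exact: H k (ltn_ord k).
Qed.

Lemma card_sum (T : finType) (P : pred T) : #|[set i | P i]| = \sum_i (P i : nat).
Proof.
rewrite -sum1_card big_mkcond /=; apply: eq_bigr => i _; rewrite inE; by case: (P i).
Qed.

Lemma Hdeg c n (col : 'I_n -> 'I_n -> 'I_c -> bool) :
  3 <= c -> colored_multigraph col ->
  (forall u v : 'I_n, u != v -> mult col u v <= c - 1) ->
  (forall (x : 'I_n) (i : 'I_c), n <= 2 * cdeg col i x) ->
  forall x, n < 2 * #|[set y | 1 < mult col x y]|.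
Proof.
move=> c3 [sym irr] mc dg x.
have E1 : \sum_y mult col x y = \sum_i cdeg col i x.
  rewrite /mult /cdeg.
  under eq_bigr do rewrite card_sum.
  rewrite exchange_big /=; apply: eq_bigr => i _; by rewrite card_sum.
have E2 : c * n <= 2 * \sum_y mult col x y.
  rewrite E1 big_distrr /=.
  apply: (@leq_trans (\sum_(i : 'I_c) n)); first by rewrite sum_nat_const card_ord.
  by apply: leq_sum => i _; exact: dg.
have E3 : \sum_y mult col x y <= \sum_y ((y != x) + (c - 2) * (1 < mult col x y)).
  apply: leq_sum => y _.
  have [E | NE] := eqVneq y x.
    subst y; rewrite /mult card_sum big1 // => i _; by rewrite (negbTE (irr x i)).
  have := mc x y; rewrite eq_sym NE => /(_ isT).
  case: ltnP => /= h1 h2; lia.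
rewrite big_split /= -big_distrr /= in E3.
have E4 : \sum_(y : 'I_n) (y != x : nat) = n.-1.
  by rewrite -card_sum cardsE cardC1 card_ord.
have E5 : \sum_(y : 'I_n) ((1 < mult col x y) : nat) = #|[set y | 1 < mult col x y]|.
  by rewrite card_sum.
rewrite E4 E5 in E3.
move: E2 E3; move: (\sum_y mult col x y) #|[set y | 1 < mult col x y]| => S d.
have n1 : 0 < n := leq_ltn_trans (leq0n _) (ltn_ord x).
nia.
Qed.

Definition Ls n c (col : 'I_n -> 'I_n -> 'I_c -> bool) (x0 : 'I_n) (s : seq 'I_n) k :=
  [set i | col (nth x0 s k) (nth x0 s (k.+1 %% n)) i].

Lemma finish n c (col : 'I_n -> 'I_n -> 'I_c -> bool) x0 s (t : 'I_c) :
  1 < n -> uniq s -> size s = n -> t \in Ls col x0 s n.-1 ->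
  (forall k, k < n.-1 -> 1 < #|Ls col x0 s k|) -> 1 < #|Ls col x0 s n.-2 :\ t| ->
  PC_hamiltonian_cycle col.
Proof.
move=> n1 us ss tL L2 Lt.
have [g Hg] := greedy n1 tL L2 Lt.
apply: (@toPC c n col x0 s g us ss) => k lk.
by have [h1 h2] := Hg k lk; rewrite inE in h1.
Qed.

Lemma Ls_rot n c (col : 'I_n -> 'I_n -> 'I_c -> bool) x0 s r j :
  size s = n -> r <= n -> j < n ->
  Ls col x0 (rot r s) j = Ls col x0 s ((j + r) %% n).
Proof.
move=> ss hr hj; rewrite /Ls.
have n0 : 0 < n by lia.
rewrite !nth_rot ?ss //; last by rewrite ltn_mod.
congr [set i | col _ (nth x0 s _) i].
by rewrite -[j.+1]addn1 modnDml -[((j + r) %% n).+1]addn1 modnDml addnAC.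
Qed.

Lemma cycle_to_path (T : Type) (e : rel T) (x0 : T) (s : seq T) :
  path.cycle e s -> path e (head x0 s) (behead s).
Proof. by case: s => //= h p; rewrite rcons_path => /andP []. Qed.

Lemma uniq_behead (T : eqType) (s : seq T) : uniq s -> uniq (behead s).
Proof. by case: s => //= h p /andP []. Qed.

Lemma mem_behead_ne (T : eqType) (x0 : T) (s : seq T) y :
  y \in s -> y != head x0 s -> y \in behead s.
Proof. by case: s => //= h p; rewrite in_cons => /orP [/eqP -> | //]; rewrite eqxx. Qed.

Theorem mainTheorem12 (c n : nat) (col : 'I_n -> 'I_n -> 'I_c -> bool) :
  3 <= c ->
  colored_multigraph col ->
  (forall u v : 'I_n, u != v -> mult col u v <= c - 1) ->
  (forall (x : 'I_n) (i : 'I_c), n <= 2 * cdeg col i x) ->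
  PC_hamiltonian_cycle col.
Proof.
move=> c3 cm mc dg.
have dH := Hdeg c3 cm mc dg.
case: cm => [sym irr].
case: (posnP n) => [n0 | N0].
  subst n; have c0 : 0 < c by lia.
  by exists 1%g, (fun _ => Ordinal c0) => [[]].
pose x0 : 'I_n := Ordinal N0.
pose H := fun u v : 'I_n => 1 < mult col u v.
have symH : symmetric H.
  move=> u v; rewrite /H /mult; congr (1 < _); apply: eq_card => i; rewrite !inE sym //.
have irrH : irreflexive H.
  move=> u; rewrite /H /mult; suff -> : [set i | col u u i] = set0 by rewrite cards0.
  by apply/setP => i; rewrite !inE (negbTE (irr u i)).
have degH : forall x, #|'I_n| < 2 * #|[set y | H x y]| by move=> x; rewrite card_ord; exact: dH.
have N3 : 2 < n.
  have := dH x0.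
  have : #|[set y | 1 < mult col x0 y]| <= #|predC1 x0|.
    apply: subset_leq_card; apply/subsetP => y.
    rewrite !inE; apply: contraTneq => ->.
    by move: (irrH x0); rewrite /H => ->.
  rewrite cardC1 card_ord; lia.
have [s [us ss cs]] := dirac x0 symH irrH degH.
rewrite card_ord in ss.
have L2 : forall k, k < n -> 1 < #|Ls col x0 s k|.
  by move=> k lk; have := cycle_nth x0 cs; rewrite ss => /(_ k lk).

case: (boolP [exists k : 'I_n, [exists x : 'I_c,
    (x \in Ls col x0 s (k.+1 %% n)) && (1 < #|Ls col x0 s k :\ x|)]]) =>
    [/existsP [k /existsP [x /andP [xL Lx]]] | Hno].
  pose r := k.+2 %% n.
  have hr : r <= n by rewrite ltnW // ltn_mod.
  apply: (@finish n c col x0 (rot r s) x).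
  - lia.
  - by rewrite rot_uniq.
  - by rewrite size_rot.
  - rewrite Ls_rot //; last by lia.
    have -> : (n.-1 + r) %% n = k.+1 %% n.
      rewrite /r modnDmr; have -> : n.-1 + k.+2 = k.+1 + n by lia.
      by rewrite modnDr.
    exact: xL.
  - by move=> j lj; rewrite Ls_rot //; [apply: L2; rewrite ltn_mod | lia].
  - rewrite Ls_rot //; last by lia.
    have -> : (n.-2 + r) %% n = k.
      rewrite /r modnDmr; have -> : n.-2 + k.+2 = k + n by lia.
      by rewrite modnDr modn_small.
    exact: Lx.
have Hn : forall k, k < n -> forall x, x \in Ls col x0 s (k.+1 %% n) ->
    #|Ls col x0 s k :\ x| <= 1.
  move=> k lk x xL; rewrite leqNgt; apply/negP => h.
  move/negP: Hno; apply; apply/existsP; exists (Ordinal lk); apply/existsP; exists x.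
  by rewrite /= xL h.
have sub : forall k, k < n -> Ls col x0 s (k.+1 %% n) \subset Ls col x0 s k.
  move=> k lk; apply/subsetP => x xL; apply/negPn/negP => xn.
  have := cardsD1 x (Ls col x0 s k); rewrite (negbTE xn) add0n => E.
  have := L2 k lk; rewrite E; have := Hn k lk x xL; lia.
have c2 : forall k, k < n -> #|Ls col x0 s k| = 2.
  move=> k lk; have /ltnW := L2 _ (ltn_pmod k.+1 N0); rewrite card_gt0 => /set0Pn [x xL].
  have := cardsD1 x (Ls col x0 s k); have := Hn k lk x xL; have := L2 k lk.
  case: (x \in _) => /=; lia.
have eqk : forall k, k < n -> Ls col x0 s (k.+1 %% n) = Ls col x0 s k.
  move=> k lk; apply/eqP; rewrite eqEcard sub // c2 // c2 //; exact: ltn_pmod.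
have all0 : forall k, k < n -> Ls col x0 s k = Ls col x0 s 0.
  elim=> [//|k IH] lk.
  by rewrite -(modn_small lk) eqk ?IH //; lia.
set S := Ls col x0 s 0.
have cS : #|S| = 2 by exact: c2.
case: (boolP (odd n)) => [nodd | neven]; last first.
  have /cards2P [a [b [ab Sab]]] : #|S| == 2 by rewrite cS.
  apply: (@toPC c n col x0 s (fun k => if odd k then b else a) us ss) => k lk.
  have gL : (if odd k then b else a) \in Ls col x0 s k.
    by rewrite all0 // -/S Sab; case: (odd k); rewrite !inE eqxx ?orbT.
  split; first by rewrite inE in gL.
  case: (ltnP k.+1 n) => h.
    by rewrite modn_small //=; case: (odd k) => //=; rewrite eq_sym.
  have ek : k.+1 = n by apply/eqP; rewrite eqn_leq lk h.
  rewrite ek modnn /=.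
  have -> : odd k by move: neven; rewrite -ek /= negbK.
  by rewrite eq_sym.
have [t tS] : exists t, t \notin S.
  have : 0 < #|~: S|.
    have := cardsC S; rewrite card_ord cS; lia.
  by rewrite card_gt0 => /set0Pn [t]; rewrite inE => tS; exists t.
have allin : forall y, y \in s.
  move=> y; apply/negPn/negP => yn.
  have : uniq (y :: s) by rewrite /= yn us.
  move/card_uniqP => E; have := max_card (mem (y :: s)).
  by rewrite E /= ss card_ord ltnn.
set z := nth x0 s n.-1.
have zl : z = last x0 s by rewrite /z -nth_last ss.
have ps := cycle_to_path x0 cs.
have cnt1 : count (H (nth x0 s 0)) (behead s) = #|[set y | H (nth x0 s 0) y]|.
  rewrite card_setP; apply: count_card; first exact: uniq_behead.
  move=> y hy; apply: (@mem_behead_ne _ x0 s y (allin y)); rewrite -nth0.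
  by apply: contraTneq hy => ->; apply/negbT; exact: irrH.
have cnt2 : count (fun y => col y z t) (take (size s).-1 s) = cdeg col t z.
  rewrite /cdeg card_setP.
  have -> : #|(fun y => col z y t)| = #|(fun y => col y z t)| by apply: eq_card => y; exact: sym.
  apply: count_card; first exact: take_uniq.
  move=> y hy; apply: (@mem_take_last _ x0 s y (allin y)); rewrite -zl.
  by apply: contraTneq hy => ->; exact: irr.
have := @cross_idx _ x0 s (H (nth x0 s 0)) (fun y => col y z t).
rewrite cnt1 cnt2 ss.
have d2 : n < 2 * #|[set y | H (nth x0 s 0) y]| by exact: dH.
have d1 := dg z t.
case; first by lia.
move=> i [lti Pi Qi].
have lsi : Ls col x0 s i = S by apply: all0; rewrite -ss; lia.
have i0 : 0 < i.
  case: (posnP i) => // i0; subst i; exfalso.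
  have := all0 n.-1 ltac:(lia); rewrite -/S => E.
  move: tS; rewrite -E inE prednK // modnn -/z sym.
  by rewrite Qi.
have i1 : i.+1 < n.-1.
  rewrite ltn_neqAle; apply/andP; split; last by rewrite -ss; lia.
  apply/eqP => E; move: tS; rewrite -lsi inE modn_small ?E -/z; last by lia.
  by rewrite Qi.
have a1 : 1 < n by lia.
have f1 : forall j, j < n.-1 -> j.+1 < n by move=> j; lia.
have f2 : (n.-2 < n - i.+1) = false by apply/negbTE; lia.
have f3 : n.-2 - (n - i.+1) = i.-1 by lia.
have f4 : i.-1 < i.+1 by lia.
have f5 : i.-1 < n by lia.
have f6 : (n.-2).+1 %% n = n.-1 by rewrite modn_small; lia.
have f7 : (i.-1).+1 %% n = i by rewrite prednK // modn_small //; lia.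
have f8 : 1 < #|S :\ t| by have := cardsD1 t S; rewrite (negbTE tS) cS /=; lia.
have lti' : i.+1 < size s by rewrite ss.
have [pD hD lD permD] := @cross _ H x0 s i symH ps lti' Pi.
set D := rev _ ++ _ in pD hD lD permD.
have uD : uniq D by rewrite (perm_uniq permD).
have sD : size D = n by rewrite (perm_size permD).
have e1 : nth x0 D n.-1 = nth x0 s i by rewrite -lD -nth_last sD.
apply: (@finish n c col x0 D t).
- exact: a1.
- exact: uD.
- exact: sD.
- rewrite inE e1 prednK // modnn nth0 hD -zl; exact: Qi.
- move=> j lj; rewrite /Ls modn_small; last exact: f1.
  by apply: (path_nth pD); rewrite sD; exact: f1.
- have e2 : nth x0 D n.-2 = nth x0 s i.-1.
    by rewrite /D nth_cat size_rev size_drop ss f2 f3 nth_take.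
  have e3 : Ls col x0 D n.-2 = S.
    rewrite /S -(all0 i.-1) //.
    by rewrite /Ls e2 f6 f7 e1.
  by rewrite e3.
Qed.
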